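(* Consider the reduced networked SVIRS system below on a connected weighted undirected graph, with nonnegative parameters satisfying $N>0$, $0<r<1$, $\mu>0$, $\beta>0$, $0\le p\le1$, $0\le\sigma\le1$, $0<\epsilon\le1$, and with $\eta=0$. If $\mathcal R_0>1$, then the endemic equilibrium $\mathbf E=(S_*,V_*,I_* )$ (constant over all nodes, with $S_*,V_*,I_*>0$) is globally asymptotically stable: for every solution with $S(x,0),V(x,0),I(x,0)>0$ at every node $x$, $\lim_{t\to\infty}(S,V,I)(x,t)=(S_*,V_*,I_* )$ uniformly in $x\in\mathcal V$.
   Context: Let $G=\langle \mathcal V,\mathcal E,\mathcal W\rangle$ be a connected weighted undirected graph without self-loops, $|\mathcal V|=n$, with weights $w(x,y)=w(y,x)>0$ for adjacent nodes $x\sim y$. For $F:\mathcal V\to\mathbb R$ define $\Delta F(x)=\sum_{y\in\mathcal V,\,y\sim x} w(x,y)\,[F(y)-F(x)]$. The reduced SVIRS model (obtained from an SVIRS model with total population $S+V+I+R=N$ at each node by substituting $R=N-S-V-I$) is, for $(x,t)\in\mathcal V\times[0,\infty)$, $\frac{dS}{dt}-\epsilon\Delta S=\mu(1-r)N-(\mu+p)S-\beta SI+\xi V+\eta(N-S-V-I)$, $\frac{dV}{dt}-\epsilon\Delta V=\mu rN+pS-\beta\sigma VI-(\mu+\xi)V$, $\frac{dI}{dt}-\epsilon\Delta I=\beta SI+\beta\sigma VI-(\mu+\gamma)I$. The endemic equilibrium $(S_*,V_*,I_* )$ is the constant positive solution of $0=\mu(1-r)N-(\mu+p)S-\beta SI+\xi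 V+\eta(N-S-V-I)$, $0=\mu rN+pS-\beta\sigma VI-(\mu+\xi)V$, $0=\beta S+\beta\sigma V-(\mu+\gamma)$. The basic reproduction number is $\mathcal R_0=\dfrac{\beta\big((\xi+(1-r)\mu)+\sigma(p+\mu r)\big)N}{(\gamma+\mu)(\mu+p+\xi)}$. *)

(* Defs.v *)
From mathcomp Require Import all_boot all_order all_algebra.
From mathcomp Require Import all_classical all_reals all_analysis.
Set Implicit Arguments. Unset Strict Implicit. Unset Printing Implicit Defensive.
Import Order.TTheory GRing.Theory Num.Theory.
Import numFieldNormedType.Exports.
Local Open Scope ring_scope.
Local Open Scope classical_set_scope.

Definition weighted_graph (R : realType) (T : finType) (adj : rel T) (w : T -> T -> R) : Prop :=
  [/\ symmetric adj, irreflexive adj,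
      (forall x y, w x y = w y x),
      (forall x y, adj x y -> 0 < w x y) &
      (forall x y, connect adj x y)].

Definition laplacian (R : realType) (T : finType) (adj : rel T) (w : T -> T -> R)
  (F : T -> R) (x : T) : R :=
  \sum_(y | adj x y) w x y * (F y - F x).

Definition SVIRS_solution (R : realType) (T : finType) (adj : rel T) (w : T -> T -> R)
  (N r mu p beta sigma xi eta gamma eps : R) (S V I : T -> R -> R) : Prop :=
  (forall x, S x t @[t --> 0^'+] --> S x 0) /\
  (forall x, V x t @[t --> 0^'+] --> V x 0) /\
  (forall x, I x t @[t --> 0^'+] --> I x 0) /\
  forall x t, 0 < t ->
    [/\ derivable (S x) t 1, derivable (V x) t 1 & derivable (I x) t 1] /\
    [/\ derive1 (S x) t - eps * laplacian adj w (S ^~ t) x =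
          mu * (1 - r) * N - (mu + p) * S x t - beta * S x t * I x t + xi * V x t
          + eta * (N - S x t - V x t - I x t),
        derive1 (V x) t - eps * laplacian adj w (V ^~ t) x =
          mu * r * N + p * S x t - beta * sigma * V x t * I x t - (mu + xi) * V x t &
        derive1 (I x) t - eps * laplacian adj w (I ^~ t) x =
          beta * S x t * I x t + beta * sigma * V x t * I x t - (mu + gamma) * I x t].

Definition endemic_equilibrium (R : realType)
  (N r mu p beta sigma xi eta gamma : R) (Ss Vs Is : R) : Prop :=
  [/\ 0 < Ss, 0 < Vs & 0 < Is] /\
  [/\ 0 = mu * (1 - r) * N - (mu + p) * Ss - beta * Ss * Is + xi * Vs
          + eta * (N - Ss - Vs - Is),
      0 = mu * r * N + p * Ss - beta * sigma * Vs * Is - (mu + xi) * Vs &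
      0 = beta * Ss + beta * sigma * Vs - (mu + gamma)].

Definition R0 (R : realType) (N r mu p beta sigma xi gamma : R) : R :=
  beta * ((xi + (1 - r) * mu) + sigma * (p + mu * r)) * N / ((gamma + mu) * (mu + p + xi)).

Definition unif_cvg (R : realType) (T : finType) (F : T -> R -> R) (c : R) : Prop :=
  forall e : R, 0 < e -> exists t0 : R, forall t, t0 <= t -> forall x, `|F x t - c| < e.

(* Main.v *)
Require Import Defs.
From mathcomp Require Import all_boot all_order all_algebra.
From mathcomp Require Import all_classical all_reals all_analysis.
From mathcomp Require Import ring lra.
Set Implicit Arguments. Unset Strict Implicit. Unset Printing Implicit Defensive.
Import Order.TTheory GRing.Theory Num.Theory.
Import numFieldNormedType.Exports.
Local Open Scope ring_scope.
Local Open Scope classical_set_scope.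

Section Gen.
Variable R : realType.

Lemma is_derive_ext' (f g : R -> R) (t df dg : R) :
  f = g -> df = dg -> is_derive t 1 f df -> is_derive t 1 g dg.
Proof. by move=> -> ->. Qed.

Lemma is_derive_expk (k t : R) :
  is_derive t 1 (fun s => expR (k * s)) (k * expR (k * t)).
Proof.
have h1 : is_derive t 1 (fun s : R => k * s) k.
  apply: is_derive_ext' (is_deriveZ k (is_derive_id t 1)).
    by apply/funext => s.
  by rewrite -[RHS]mulr1.
have := is_derive1_comp (is_derive_expR (k * t)) h1.
apply: is_derive_ext'; first by apply/funext => s.
by rewrite mulrC.
Qed.

Lemma is_derive_expM (k t : R) (u : R -> R) (du : R) :
  is_derive t 1 u du ->
  is_derive t 1 (fun s => expR (k * s) * u s) (expR (k * t) * (du + k * u t)).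
Proof.
move=> hu.
have := is_deriveM (is_derive_expk k t) hu.
apply: is_derive_ext'; first by apply/funext => s.
rewrite /GRing.scale /=; ring.
Qed.

Lemma nonincr (f df : R -> R) (a b : R) : a <= b ->
  (forall t, a <= t <= b -> is_derive t 1 f (df t)) ->
  (forall t, a < t < b -> df t <= 0) -> f b <= f a.
Proof.
move=> ab hd hneg; case: (ltgtP a b) ab => // [altb|->] _; last by [].
have cont : {within `[a, b], continuous f}.
  apply: continuous_in_subspaceT => t; rewrite inE /= in_itv /= => tab.
  have [hdv _] := hd t tab.
  exact/differentiable_continuous/derivable1_diffP.
have hd' : forall c, c \in `]a, b[%R -> is_derive c 1 f (df c).
  by move=> c; rewrite in_itv /= => /andP[? ?]; apply: hd; rewrite !ltW.
have [c cab eq] := MVT altb hd' cont.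
rewrite -subr_le0 eq; apply: mulr_le0_ge0; last by rewrite subr_ge0 ltW.
by apply: hneg; rewrite in_itv /= in cab.
Qed.

Lemma cmp_up (u du : R -> R) (k M a b : R) : a <= b ->
  (forall t, a <= t <= b -> is_derive t 1 u (du t)) ->
  (forall t, a < t < b -> du t <= - k * (u t - M)) ->
  u a <= M -> u b <= M.
Proof.
move=> ab hd hle ua.
have := @nonincr (fun s => expR (k * s) * (u s - M))
   (fun s => expR (k * s) * (du s + k * (u s - M))) a b ab.
have hd2 : forall t, a <= t <= b -> is_derive t 1 (fun s => u s - M) (du t).
  move=> t tab; apply: is_derive_ext' (is_deriveB (hd t tab) (is_derive_cst M t 1)).
    by apply/funext.
  by rewrite subr0.
move=> /(_ (fun t tab => is_derive_expM k (hd2 t tab))).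
have : forall t, a < t < b -> expR (k * t) * (du t + k * (u t - M)) <= 0.
  move=> t tab; apply: mulr_ge0_le0; first exact: expR_ge0.
  have := hle t tab; lra.
move=> h /(_ h) hh.
have : expR (k * b) * (u b - M) <= 0.
  apply: le_trans hh _; apply: mulr_ge0_le0; first exact: expR_ge0. lra.
rewrite pmulr_rle0 ?expR_gt0 //; lra.
Qed.

Lemma cmp_low (u du : R -> R) (k a b : R) : a <= b ->
  (forall t, a <= t <= b -> is_derive t 1 u (du t)) ->
  (forall t, a < t < b -> - k * u t <= du t) ->
  0 < u a -> 0 < u b.
Proof.
move=> ab hd hle ua.
have hd2 : forall t, a <= t <= b -> is_derive t 1 (fun s => - (expR (k * s) * u s))
    (- (expR (k * t) * (du t + k * u t))).
  by move=> t tab; apply: is_deriveN; apply: is_derive_expM; apply: hd.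
have := @nonincr _ _ a b ab hd2.
have : forall t, a < t < b -> - (expR (k * t) * (du t + k * u t)) <= 0.
  move=> t tab; rewrite oppr_le0; apply: mulr_ge0; first exact: expR_ge0.
  have := hle t tab; lra.
move=> h /(_ h) hh.
have : 0 < expR (k * b) * u b.
  have : 0 < expR (k * a) * u a by apply: mulr_gt0 => //; exact: expR_gt0.
  lra.
by rewrite pmulr_rgt0 // expR_gt0.
Qed.

Lemma ln_le_sub1 (z : R) : 0 < z -> ln z <= z - 1.
Proof.
move=> z0; have := expR_ge1Dx (ln z); rewrite lnK; last by rewrite posrE.
lra.
Qed.

Lemma lyap_lb (u c : R) : 0 < u -> 0 < c -> c - c * ln c <= u - c * ln u.
Proof.
move=> u0 c0.
have := ln_le_sub1 (divr_gt0 u0 c0).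
rewrite ln_div ?posrE // => h.
have : c * (ln u - ln c) <= c * (u / c - 1) by apply: ler_wpM2l => //; apply: ltW.
have -> : c * (u / c - 1) = u - c by field; apply: lt0r_neq0.
lra.
Qed.
Lemma is_derive_bigsum (T : finType) (h : T -> R -> R) (t : R) (dh : T -> R) :
  (forall x, is_derive t 1 (h x) (dh x)) ->
  is_derive t 1 (fun s => \sum_x h x s) (\sum_x dh x).
Proof.
move=> H.
have -> : (fun s => \sum_x h x s) = \sum_x h x.
  by apply/funext => s; rewrite fct_sumE.
by elim/big_ind2 : _ => // [|] *; [exact: is_derive_cst|exact: is_deriveD].
Qed.

Lemma lin_upper (f df : R -> R) (K a b : R) : a <= b ->
  (forall t, a <= t <= b -> is_derive t 1 f (df t)) ->
  (forall t, a < t < b -> df t <= K) -> f b <= f a + K * (b - a).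
Proof.
move=> ab hd hk.
have := @nonincr (fun u => f u - K * u) (fun u => df u - K) a b ab.
have d : forall t, a <= t <= b -> is_derive t 1 (fun u => f u - K * u) (df t - K).
  move=> t tab; have := is_deriveB (hd t tab) (is_deriveZ K (is_derive_id t 1)).
  apply: is_derive_ext'; first by apply/funext.
  by rewrite /GRing.scale /= mulr1.
move=> /(_ d).
have n : forall t, a < t < b -> df t - K <= 0 by move=> t /hk; lra.
move=> /(_ n); lra.
Qed.

Lemma lin_lower (f df : R -> R) (K a b : R) : a <= b ->
  (forall t, a <= t <= b -> is_derive t 1 f (df t)) ->
  (forall t, a < t < b -> K <= df t) -> f a + K * (b - a) <= f b.
Proof.
move=> ab hd hk.
have d : forall t, a <= t <= b -> is_derive t 1 (fun u => - f u) (- df t).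
  by move=> t tab; apply: is_deriveN; apply: hd.
have := @lin_upper (fun u => - f u) (fun u => - df u) (- K) a b ab d.
have n : forall t, a < t < b -> - df t <= - K by move=> t /hk; lra.
move=> /(_ n); lra.
Qed.

End Gen.

Section Lap.
Variables (R : realType) (T : finType) (adj : rel T) (w : T -> T -> R).
Hypothesis adjS : symmetric adj.
Hypothesis wS : forall x y, w x y = w y x.
Hypothesis wpos : forall x y, adj x y -> 0 < w x y.

Lemma sym_sum (g : T -> T -> R) :
  \sum_x \sum_(y | adj x y) g x y = \sum_x \sum_(y | adj x y) g y x.
Proof.
under eq_bigr do rewrite big_mkcond /=.
rewrite exchange_big /=; apply: eq_bigr => y _.
by rewrite [RHS]big_mkcond /=; apply: eq_bigr => x _; rewrite adjS.
Qed.

Lemma lap_sum0 (F : T -> R) : \sum_x laplacian adj w F x = 0.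
Proof.
rewrite /laplacian.
set H := \sum_x _.
have eH : H = - H.
  rewrite {1}/H sym_sum /H -sumrN; apply: eq_bigr => x _.
  rewrite -sumrN; apply: eq_bigr => y _; rewrite wS; lra.
lra.
Qed.

Lemma lap_lyap (F : T -> R) (c : R) : 0 <= c -> (forall x, 0 < F x) ->
  \sum_x (1 - c / F x) * laplacian adj w F x <= 0.
Proof.
move=> c0 Fpos; rewrite /laplacian.
under eq_bigr do rewrite big_distrr /=.
set H := \sum_x _.
have eH : H = \sum_x \sum_(y | adj x y) (1 - c / F y) * (w x y * (F x - F y)).
  by rewrite {1}/H sym_sum; apply: eq_bigr => x _; apply: eq_bigr => y _; rewrite wS.
suff : H + H <= 0 by lra.
rewrite {2}eH /H -big_split /=; apply: sumr_le0 => x _.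
rewrite -big_split /=; apply: sumr_le0 => y axy.
have wp := wpos axy; have Fx := Fpos x; have Fy := Fpos y.
have -> : (1 - c / F x) * (w x y * (F y - F x)) + (1 - c / F y) * (w x y * (F x - F y))
   = - (c * w x y * ((F y - F x) ^+ 2 / (F x * F y))).
  by field; apply/andP; split; apply/lt0r_neq0.
rewrite oppr_le0; apply: mulr_ge0; first by apply: mulr_ge0 => //; apply: ltW.
by apply: divr_ge0; [apply: sqr_ge0 | apply: ltW; apply: mulr_gt0].
Qed.
End Lap.

Lemma amgm_poly (R : realFieldType) (x y : R) : 0 < x -> 0 < y ->
  0 <= x ^+ 2 + y + x * y ^+ 2 - 3 * x * y.
Proof.
move=> x0 y0.
have e : 4 * (x ^+ 2 + y + x * y ^+ 2 - 3 * x * y) =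
   (2 * x + y ^+ 2 - 3 * y) ^+ 2 + y * (y - 1) ^+ 2 * (4 - y) by ring.
case: (lerP y 3) => hy.
  have h1 : 0 <= (2 * x + y ^+ 2 - 3 * y) ^+ 2 by apply: sqr_ge0.
  have h2 : 0 <= y * (y - 1) ^+ 2 * (4 - y).
    apply: mulr_ge0; [apply: mulr_ge0; [lra | apply: sqr_ge0] | lra].
  lra.
have : 0 <= x * y * (y - 3) by apply: mulr_ge0; [apply: mulr_ge0|]; lra.
have : 0 <= x ^+ 2 by apply: sqr_ge0.
lra.
Qed.

Section Key.
Variable R : realFieldType.

Lemma f1_le0 (x : R) : 0 < x -> 2 - x - 1 / x = - ((x - 1) ^+ 2 / x).
Proof. by move=> x0; field; apply: lt0r_neq0. Qed.

Lemma amgm3 (x y : R) : 0 < x -> 0 < y -> 3 - y - 1 / x - x / y <= 0.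
Proof.
move=> x0 y0.
have -> : 3 - y - 1 / x - x / y = - ((x ^+ 2 + y + x * y ^+ 2 - 3 * x * y) / (x * y)).
  by field; apply/andP; split; apply: lt0r_neq0.
rewrite oppr_le0; apply: divr_ge0; first exact: amgm_poly.
by apply: ltW; apply: mulr_gt0.
Qed.

Lemma amgm2 (x y : R) : 0 < x -> 0 < y -> 2 - x / y - y / x <= 0.
Proof.
move=> x0 y0.
have -> : 2 - x / y - y / x = - ((x - y) ^+ 2 / (x * y)).
  by field; apply/andP; split; apply: lt0r_neq0.
rewrite oppr_le0; apply: divr_ge0; first exact: sqr_ge0.
by apply: ltW; apply: mulr_gt0.
Qed.

Lemma key_alg (s v i ss vs ist mu p beta sigma xi gamma a b : R) :
  0 < s -> 0 < v -> 0 < i -> 0 < ss -> 0 < vs -> 0 < ist ->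
  0 <= p -> 0 <= xi -> 0 < mu -> 0 < beta -> 0 <= sigma -> 0 < a -> 0 < b ->
  a = (mu + p) * ss + beta * ss * ist - xi * vs ->
  b = (mu + xi) * vs + beta * sigma * vs * ist - p * ss ->
  mu + gamma = beta * ss + beta * sigma * vs ->
  (1 - ss / s) * (a - (mu + p) * s - beta * s * i + xi * v)
  + (1 - vs / v) * (b + p * s - beta * sigma * v * i - (mu + xi) * v)
  + (1 - ist / i) * (beta * s * i + beta * sigma * v * i - (mu + gamma) * i)
  <= - (Num.min ((mu + beta * ist) * ss) a * ((s - ss) ^+ 2 / (s * ss))
        + Num.min ((mu + beta * sigma * ist) * vs) b * ((v - vs) ^+ 2 / (v * vs))).
Proof.
move=> s0 v0 i0 ss0 vs0 ist0 p0 xi0 mu0 be0 si0 a0 b0 ha hb hg.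
set A := (mu + beta * ist) * ss; set B := (mu + beta * sigma * ist) * vs.
set x := s / ss; set y := v / vs.
have x0 : 0 < x by apply: divr_gt0.
have y0 : 0 < y by apply: divr_gt0.
have A0 : 0 < A by rewrite /A; apply: mulr_gt0 => //; apply: ltr_wpDr => //; apply: mulr_ge0; lra.
have B0 : 0 < B.
  rewrite /B; apply: mulr_gt0 => //; apply: ltr_wpDr => //.
  by apply: mulr_ge0; [apply: mulr_ge0|]; lra.
have e1 : (s - ss) ^+ 2 / (s * ss) = (x - 1) ^+ 2 / x.
  by rewrite /x; field; apply/andP; split; apply: lt0r_neq0.
have e2 : (v - vs) ^+ 2 / (v * vs) = (y - 1) ^+ 2 / y.
  by rewrite /y; field; apply/andP; split; apply: lt0r_neq0.
rewrite e1 e2.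
have iden : (1 - ss / s) * (a - (mu + p) * s - beta * s * i + xi * v)
  + (1 - vs / v) * (b + p * s - beta * sigma * v * i - (mu + xi) * v)
  + (1 - ist / i) * (beta * s * i + beta * sigma * v * i - (mu + gamma) * i)
  = A * (2 - x - 1 / x) + B * (2 - y - 1 / y)
    + (p * ss) * ((1 - 1 / x) * (1 - x / y)) + (xi * vs) * ((1 - 1 / y) * (1 - y / x)).
  rewrite /A /B /x /y hg ha hb; field.
  by rewrite !lt0r_neq0.
rewrite iden !f1_le0 //.
have g3 := amgm3 x0 y0; have g3b := amgm3 y0 x0; have g2 := amgm2 x0 y0.
have q1 : 0 <= (x - 1) ^+ 2 / x by apply: divr_ge0; [apply: sqr_ge0 | apply: ltW].
have q2 : 0 <= (y - 1) ^+ 2 / y by apply: divr_ge0; [apply: sqr_ge0 | apply: ltW].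
have P0 : 0 <= p * ss by apply: mulr_ge0; lra.
have Q0 : 0 <= xi * vs by apply: mulr_ge0; lra.
have eh1 : (1 - 1 / x) * (1 - x / y) = (3 - y - 1 / x - x / y) - (2 - y - 1 / y).
  by field; apply/andP; split; apply: lt0r_neq0.
have eh2 : (1 - 1 / y) * (1 - y / x) = (3 - x - 1 / y - y / x) - (2 - x - 1 / x).
  by field; apply/andP; split; apply: lt0r_neq0.
have eh12 : (1 - 1 / x) * (1 - x / y) + (1 - 1 / y) * (1 - y / x) = 2 - x / y - y / x.
  by field; apply/andP; split; apply: lt0r_neq0.
rewrite !f1_le0 // in eh1 eh2.
case: (lerP (p * ss) (xi * vs)) => hPQ.
- (* a = A + P - Q <= A ; B = b + P - Q <= b *)
  have am : Num.min A a = a by apply/min_idPr; rewrite ha /A; lra.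
  have bm : Num.min B b = B by apply/min_idPl; rewrite hb /B; lra.
  rewrite am bm.
  set u := (x - 1) ^+ 2 / x in q1 eh1 eh2 *; set z := (y - 1) ^+ 2 / y in q2 eh1 eh2 *.
  set h1 := (1 - 1 / x) * (1 - x / y) in eh1 eh12 *.
  set h2 := (1 - 1 / y) * (1 - y / x) in eh2 eh12 *.
  have hA : A = a - p * ss + xi * vs by rewrite ha /A; ring.
  rewrite hA.
  have t1 : (xi * vs - p * ss) * (3 - x - 1 / y - y / x) <= 0.
    by apply: mulr_ge0_le0; lra.
  have t2 : (p * ss) * (2 - x / y - y / x) <= 0 by apply: mulr_ge0_le0; lra.
  have hh2 : h2 = 3 - x - 1 / y - y / x + u by rewrite eh2; ring.
  have hh1 : h1 = 2 - x / y - y / x - h2 by rewrite -eh12; ring.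
  rewrite hh1 hh2.
  have e3 : (a - p * ss + xi * vs) * - u + B * - z + p * ss * (2 - x / y - y / x - (3 - x - 1 / y - y / x + u)) + xi * vs * (3 - x - 1 / y - y / x + u)
     = - (a * u + B * z) + (xi * vs - p * ss) * (3 - x - 1 / y - y / x) + (p * ss) * (2 - x / y - y / x) by ring.
  rewrite e3; lra.
- have am : Num.min A a = A by apply/min_idPl; rewrite ha /A; lra.
  have bm : Num.min B b = b by apply/min_idPr; rewrite hb /B; lra.
  rewrite am bm.
  set u := (x - 1) ^+ 2 / x in q1 eh1 eh2 *; set z := (y - 1) ^+ 2 / y in q2 eh1 eh2 *.
  set h1 := (1 - 1 / x) * (1 - x / y) in eh1 eh12 *.
  set h2 := (1 - 1 / y) * (1 - y / x) in eh2 eh12 *.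
  have hB : B = b + p * ss - xi * vs by rewrite hb /B; ring.
  rewrite hB.
  have t1 : (p * ss - xi * vs) * (3 - y - 1 / x - x / y) <= 0.
    by apply: mulr_ge0_le0; lra.
  have t2 : (xi * vs) * (2 - x / y - y / x) <= 0 by apply: mulr_ge0_le0; lra.
  have hh1 : h1 = 3 - y - 1 / x - x / y + z by rewrite eh1; ring.
  have hh2 : h2 = 2 - x / y - y / x - h1 by rewrite -eh12; ring.
  rewrite hh2 hh1.
  have e3 : A * - u + (b + p * ss - xi * vs) * - z + p * ss * (3 - y - 1 / x - x / y + z) + xi * vs * (2 - x / y - y / x - (3 - y - 1 / x - x / y + z))
     = - (A * u + b * z) + (p * ss - xi * vs) * (3 - y - 1 / x - x / y) + (xi * vs) * (2 - x / y - y / x) by ring.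
  rewrite e3; lra.
Qed.
End Key.

Section Bnd.
Variable R : realFieldType.

Lemma prod_lb (a b A B : R) : `|a| <= A -> `|b| <= B -> - (A * B) <= a * b.
Proof.
move=> ha hb.
have : `|a * b| <= A * B.
  by rewrite normrM; apply: ler_pM => //; apply: normr_ge0.
rewrite ler_norml => /andP[h _]; exact: h.
Qed.

Lemma frac_ge (m q s ss Mb cc : R) : 0 < m -> 0 <= q -> 0 < s -> s <= Mb -> 0 < ss ->
  cc <= m / (Mb * ss) -> cc * q <= m * (q / (s * ss)).
Proof.
move=> m0 q0 s0 sM ss0 hc.
have Mb0 : 0 < Mb by exact: lt_le_trans s0 sM.
apply: (@le_trans _ _ (m / (Mb * ss) * q)); first by apply: ler_wpM2r.
have -> : m / (Mb * ss) * q = m * (q / (Mb * ss)) by rewrite mulrA mulrAC.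
apply: ler_wpM2l; first exact: ltW.
apply: ler_wpM2l => //.
rewrite lef_pV2 ?posrE; first by apply: ler_wpM2r => //; apply: ltW.
  by apply: mulr_gt0.
by apply: mulr_gt0.
Qed.

Lemma fbnd (s v i Mb mu p xi gamma beta sigma r N : R) :
  0 < s -> s <= Mb -> 0 < v -> v <= Mb -> 0 < i -> i <= Mb ->
  0 <= mu -> 0 <= p -> 0 <= xi -> 0 <= gamma -> 0 <= beta -> 0 <= sigma -> sigma <= 1 ->
  0 < r -> r < 1 -> 0 <= N ->
  let K0 := mu * N + (mu + p + xi + gamma) * Mb + 2 * beta * Mb * Mb in
  [/\ `|mu * (1 - r) * N - (mu + p) * s - beta * s * i + xi * v| <= K0,
      `|mu * r * N + p * s - beta * sigma * v * i - (mu + xi) * v| <= K0 &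
      `|beta * s * i + beta * sigma * v * i - (mu + gamma) * i| <= K0].
Proof.
move=> s0 sM v0 vM i0 iM mu0 p0 xi0 g0 b0 sg0 sg1 r0 r1 N0 K0.
have si1 : 0 <= s * i by apply: mulr_ge0; apply: ltW.
have si2 : s * i <= Mb * Mb by apply: ler_pM => //; apply: ltW.
have vi1 : 0 <= v * i by apply: mulr_ge0; apply: ltW.
have vi2 : v * i <= Mb * Mb by apply: ler_pM => //; apply: ltW.
have svi1 : 0 <= sigma * (v * i) by apply: mulr_ge0.
have svi2 : sigma * (v * i) <= v * i.
  by rewrite -[X in _ <= X]mul1r; apply: ler_wpM2r.
have bsi1 : 0 <= beta * (s * i) by apply: mulr_ge0.
have bsi2 : beta * (s * i) <= beta * (Mb * Mb) by apply: ler_wpM2l.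
have bvi1 : 0 <= beta * (sigma * (v * i)) by apply: mulr_ge0.
have bvi2 : beta * (sigma * (v * i)) <= beta * (Mb * Mb).
  by apply: ler_wpM2l => //; exact: le_trans svi2 vi2.
have l1 : forall c x, 0 <= c -> 0 < x -> x <= Mb -> 0 <= c * x <= c * Mb.
  move=> c x c0 x0 xM; apply/andP; split; first by apply: mulr_ge0 => //; apply: ltW.
  by apply: ler_wpM2l.
have /andP[ms1 ms2] := l1 _ _ mu0 s0 sM.
have /andP[ps1 ps2] := l1 _ _ p0 s0 sM.
have /andP[mv1 mv2] := l1 _ _ mu0 v0 vM.
have /andP[xv1 xv2] := l1 _ _ xi0 v0 vM.
have /andP[pv1 pv2] := l1 _ _ p0 v0 vM.
have /andP[mi1 mi2] := l1 _ _ mu0 i0 iM.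
have /andP[gi1 gi2] := l1 _ _ g0 i0 iM.
have /andP[xs1 xs2] := l1 _ _ xi0 s0 sM.
have /andP[gs1 gs2] := l1 _ _ g0 s0 sM.
have /andP[xi1' xi2'] := l1 _ _ xi0 i0 iM.
have /andP[pi1 pi2] := l1 _ _ p0 i0 iM.
have /andP[gv1 gv2] := l1 _ _ g0 v0 vM.
have mN : 0 <= mu * N by apply: mulr_ge0.
have mrN1 : 0 <= mu * r * N by apply: mulr_ge0 => //; apply: mulr_ge0 => //; apply: ltW.
have mrN2 : mu * r * N <= mu * N.
  rewrite -mulrA; apply: ler_wpM2l => //.
  by rewrite -[X in _ <= X]mul1r; apply: ler_wpM2r => //; apply: ltW.
have e1 : beta * s * i = beta * (s * i) by ring.
have e2 : beta * sigma * v * i = beta * (sigma * (v * i)) by ring.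
rewrite /K0 e1 e2; split; rewrite ler_norml; apply/andP; split; lra.
Qed.
End Bnd.

Section Main.
Variables (R : realType) (T : finType) (adj : rel T) (w : T -> T -> R)
  (N r mu p beta sigma xi gamma eps : R) (Ss Vs Is : R) (S V I : T -> R -> R).
Hypothesis Hg : weighted_graph adj w.
Hypotheses (HN : 0 < N) (Hr0 : 0 < r) (Hr1 : r < 1) (Hmu : 0 < mu) (Hbeta : 0 < beta)
  (Hp0 : 0 <= p) (Hp1 : p <= 1) (Hs0 : 0 <= sigma) (Hs1 : sigma <= 1) (Heps : 0 < eps)
  (Hxi : 0 <= xi) (Hgam : 0 <= gamma).
Hypothesis Heq : endemic_equilibrium N r mu p beta sigma xi 0 gamma Ss Vs Is.
Hypothesis Hsol : SVIRS_solution adj w N r mu p beta sigma xi 0 gamma eps S V I.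
Hypothesis Hinit : forall x, 0 < S x 0 /\ 0 < V x 0 /\ 0 < I x 0.

Let adjS : symmetric adj. Proof. by case: Hg. Qed.
Let wS : forall x y, w x y = w y x. Proof. by case: Hg. Qed.
Let wpos : forall x y, adj x y -> 0 < w x y. Proof. by case: Hg. Qed.

Definition fS (x : T) (t : R) := mu * (1 - r) * N - (mu + p) * S x t - beta * S x t * I x t + xi * V x t.
Definition fV (x : T) (t : R) := mu * r * N + p * S x t - beta * sigma * V x t * I x t - (mu + xi) * V x t.
Definition fI (x : T) (t : R) := beta * S x t * I x t + beta * sigma * V x t * I x t - (mu + gamma) * I x t.
Definition dS (x : T) (t : R) := eps * laplacian adj w (S ^~ t) x + fS x t.
Definition dV (x : T) (t : R) := eps * laplacian adj w (V ^~ t) x + fV x t.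
Definition dI (x : T) (t : R) := eps * laplacian adj w (I ^~ t) x + fI x t.

Lemma derS (x : T) (t : R) : 0 < t -> is_derive t 1 (S x) (dS x t).
Proof.
move=> t0; case: Hsol => _ [_ [_ H]]; have [[d1 _ _] [e1 _ _]] := H x t t0.
apply: is_derive_ext' (derivableP d1) => //.
by rewrite -derive1E /dS /fS; move: e1; rewrite mul0r addr0 => <-; ring.
Qed.

Lemma derV (x : T) (t : R) : 0 < t -> is_derive t 1 (V x) (dV x t).
Proof.
move=> t0; case: Hsol => _ [_ [_ H]]; have [[_ d1 _] [_ e1 _]] := H x t t0.
apply: is_derive_ext' (derivableP d1) => //.
by rewrite -derive1E /dV /fV; move: e1 => <-; ring.
Qed.

Lemma derI (x : T) (t : R) : 0 < t -> is_derive t 1 (I x) (dI x t).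
Proof.
move=> t0; case: Hsol => _ [_ [_ H]]; have [[_ _ d1] [_ _ e1]] := H x t t0.
apply: is_derive_ext' (derivableP d1) => //.
by rewrite -derive1E /dI /fI; move: e1 => <-; ring.
Qed.

Definition Gt (t : R) := forall x, 0 < S x t /\ 0 < V x t /\ 0 < I x t.

Lemma start : exists t0, 0 < t0 /\ Gt t0.
Proof.
case: Hsol => cS [cV [cI _]].
have Hx : forall x, \forall t \near 0^'+, 0 < S x t /\ 0 < V x t /\ 0 < I x t.
  move=> x; have [s0 [v0 i0]] := Hinit x.
  near=> t; split; [|split]; near: t.
  - exact: (cvgr_gt _ (cS x) 0 s0).
  - exact: (cvgr_gt _ (cV x) 0 v0).
  - exact: (cvgr_gt _ (cI x) 0 i0).
have H2 := @filter_forall R T (fun x t => 0 < S x t /\ 0 < V x t /\ 0 < I x t) (0^'+) _ Hx.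
have H : \forall t \near 0^'+, 0 < t /\ Gt t.
  near=> t; split; near: t; [exact: nbhs_right_gt | exact: H2].
have [t ht] := filter_ex H.
by exists t.
Unshelve. all: by end_near.
Qed.


Definition Zf (t : R) := \sum_x (S x t + V x t + I x t).
Definition dZ (t : R) := \sum_x (dS x t + dV x t + dI x t).
Definition Dg := \sum_x \sum_(y | adj x y) w x y.

Lemma derZ (t : R) : 0 < t -> is_derive t 1 Zf (dZ t).
Proof.
move=> t0; apply: is_derive_bigsum => x.
have := is_deriveD (is_deriveD (derS x t0) (derV x t0)) (derI x t0).
by apply: is_derive_ext'; first by apply/funext.
Qed.

Lemma dZ_eq (t : R) : dZ t = \sum_x (mu * N - mu * (S x t + V x t + I x t) - gamma * I x t).
Proof.
rewrite /dZ.
have e : forall x, dS x t + dV x t + dI x t = eps * (laplacian adj w (S ^~ t) x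
   + laplacian adj w (V ^~ t) x + laplacian adj w (I ^~ t) x)
   + (mu * N - mu * (S x t + V x t + I x t) - gamma * I x t).
  by move=> x; rewrite /dS /dV /dI /fS /fV /fI; ring.
under eq_bigr do rewrite e.
rewrite big_split /= -mulr_sumr !big_split /= !lap_sum0 //.
by rewrite !addr0 mulr0 add0r.
Qed.

Lemma comp_le_Z (t : R) x : Gt t -> [/\ S x t <= Zf t, V x t <= Zf t & I x t <= Zf t].
Proof.
move=> G.
have h : S x t + V x t + I x t <= Zf t.
  rewrite /Zf (bigD1 x) //= lerDl; apply: sumr_ge0 => y _.
  by have [a [b c]] := G y; lra.
have [a [b c]] := G x.
split; lra.
Qed.

Lemma Dg_ge0 : 0 <= Dg.
Proof.
by apply: sumr_ge0 => x _; apply: sumr_ge0 => y axy; apply: ltW; apply: wpos.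
Qed.

Lemma row_le_D x : \sum_(y | adj x y) w x y <= Dg.
Proof.
rewrite /Dg [X in _ <= X](bigD1 x) //= lerDl; apply: sumr_ge0 => z _.
by apply: sumr_ge0 => y axy; apply: ltW; apply: wpos.
Qed.

Lemma lap_lower (F : T -> R) x : (forall y, 0 <= F y) ->
  - Dg * F x <= laplacian adj w F x.
Proof.
move=> F0; rewrite /laplacian.
have : \sum_(y | adj x y) w x y * (- F x) <= \sum_(y | adj x y) w x y * (F y - F x).
  apply: ler_sum => y axy; apply: ler_wpM2l; first by apply: ltW; apply: wpos.
  have := F0 y; lra.
rewrite -mulr_suml => h; apply: le_trans h.
rewrite mulrN mulNr lerN2; apply: ler_wpM2r; first exact: F0.
exact: row_le_D.
Qed.

Lemma lap_abs (F : T -> R) x (K : R) : (forall y, `|F y - F x| <= K) ->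
  `|laplacian adj w F x| <= Dg * K.
Proof.
move=> FK; rewrite /laplacian.
apply: le_trans (ler_norm_sum _ _ _) _.
have K0 : 0 <= K by apply: le_trans (FK x); apply: normr_ge0.
apply: (@le_trans _ _ (\sum_(y | adj x y) w x y * K)).
  apply: ler_sum => y axy; rewrite normrM ger0_norm; last by apply: ltW; apply: wpos.
  by apply: ler_wpM2l; [apply: ltW; apply: wpos | apply: FK].
by rewrite -mulr_suml; apply: ler_wpM2r => //; apply: row_le_D.
Qed.

Lemma a_pos : 0 < mu * (1 - r) * N.
Proof. have h : 0 < 1 - r by move: Hr1; lra. exact: mulr_gt0 (mulr_gt0 Hmu h) HN. Qed.
Lemma b_pos : 0 < mu * r * N.
Proof. exact: mulr_gt0 (mulr_gt0 Hmu Hr0) HN. Qed.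

Section After.
Variable t0 : R.
Hypothesis Ht0 : 0 < t0.
Hypothesis HG0 : Gt t0.

Definition Mb := Num.max (Zf t0) (\sum_(x : T) N + 1).
Definition Kl := eps * Dg + mu + p + xi + gamma + beta * Mb.

Lemma Zbound (b : R) : t0 <= b -> (forall s, t0 < s < b -> Gt s) ->
  forall s, t0 <= s <= b -> Zf s <= Mb.
Proof.
move=> t0b G s /andP[hs1 hs2].
apply: (@cmp_up _ Zf dZ mu Mb t0 s hs1).
- move=> u /andP[u1 u2]; apply: derZ; exact: lt_le_trans Ht0 u1.
- move=> u /andP[u1 u2].
  have Gu : Gt u by apply: G; apply/andP; split; lra.
  rewrite dZ_eq.
  have : \sum_x (mu * N - mu * (S x u + V x u + I x u) - gamma * I x u)
       <= \sum_x (mu * N - mu * (S x u + V x u + I x u)).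
    apply: ler_sum => x _; have [_ [_ c]] := Gu x.
    have : 0 <= gamma * I x u by apply: mulr_ge0 => //; apply: ltW.
    lra.
  move=> h; apply: le_trans h _.
  rewrite sumrB -!mulr_sumr -/(Zf u).
  have : \sum_(x : T) N <= Mb.
    apply: (@le_trans _ _ (\sum_(x : T) N + 1)); first by rewrite lerDl.
    by rewrite /Mb le_max lexx orbT.
  move=> h2; have : mu * (\sum_(x : T) N) <= mu * Mb by apply: ler_wpM2l => //; apply: ltW.
  lra.
- by rewrite /Mb le_max lexx.
Qed.

Lemma comps_le_M (u : R) x : Gt u -> Zf u <= Mb ->
  [/\ 0 < S x u, 0 < V x u & 0 < I x u] /\ [/\ S x u <= Mb, V x u <= Mb & I x u <= Mb].
Proof.
move=> G Z; have [a [b c]] := G x; have [h1 h2 h3] := comp_le_Z x G.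
split; split; lra.
Qed.

Lemma lowS (u : R) x : Gt u -> Zf u <= Mb -> - Kl * S x u <= dS x u.
Proof.
move=> G Z; have [[s0 v0 i0] [s1 v1 i1]] := comps_le_M x G Z.
have L : - Dg * S x u <= laplacian adj w (S ^~ u) x.
  by apply: lap_lower => y; have [a _] := G y; apply: ltW.
have h1 : eps * (- Dg * S x u) <= eps * laplacian adj w (S ^~ u) x.
  by apply: ler_wpM2l => //; apply: ltW.
have h2 : beta * S x u * I x u <= beta * S x u * Mb.
  by apply: ler_wpM2l => //; apply: mulr_ge0; apply: ltW.
have h3 : 0 <= xi * V x u by apply: mulr_ge0 => //; apply: ltW.
have h4 : 0 <= mu * (1 - r) * N by apply: ltW; apply: a_pos.
have h5 : 0 <= xi * S x u by apply: mulr_ge0 => //; apply: ltW.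
have h6 : 0 <= gamma * S x u by apply: mulr_ge0 => //; apply: ltW.
rewrite /dS /fS /Kl; lra.
Qed.

Lemma lowV (u : R) x : Gt u -> Zf u <= Mb -> - Kl * V x u <= dV x u.
Proof.
move=> G Z; have [[s0 v0 i0] [s1 v1 i1]] := comps_le_M x G Z.
have L : - Dg * V x u <= laplacian adj w (V ^~ u) x.
  by apply: lap_lower => y; have [_ [a _]] := G y; apply: ltW.
have h1 : eps * (- Dg * V x u) <= eps * laplacian adj w (V ^~ u) x.
  by apply: ler_wpM2l => //; apply: ltW.
have h2 : beta * sigma * V x u * I x u <= beta * V x u * Mb.
  have e : beta * sigma * V x u * I x u = (beta * V x u) * (sigma * I x u) by ring.
  rewrite e; apply: ler_wpM2l; first by apply: mulr_ge0; apply: ltW.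
  have : sigma * I x u <= 1 * I x u by apply: ler_wpM2r => //; apply: ltW.
  lra.
have h3 : 0 <= p * S x u by apply: mulr_ge0 => //; apply: ltW.
have h4 : 0 <= mu * r * N by apply: ltW; apply: b_pos.
have h5 : 0 <= p * V x u by apply: mulr_ge0 => //; apply: ltW.
have h6 : 0 <= gamma * V x u by apply: mulr_ge0 => //; apply: ltW.
rewrite /dV /fV /Kl; lra.
Qed.

Lemma lowI (u : R) x : Gt u -> Zf u <= Mb -> - Kl * I x u <= dI x u.
Proof.
move=> G Z; have [[s0 v0 i0] [s1 v1 i1]] := comps_le_M x G Z.
have L : - Dg * I x u <= laplacian adj w (I ^~ u) x.
  by apply: lap_lower => y; have [_ [_ a]] := G y; apply: ltW.
have h1 : eps * (- Dg * I x u) <= eps * laplacian adj w (I ^~ u) x.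
  by apply: ler_wpM2l => //; apply: ltW.
have h2 : 0 <= beta * S x u * I x u.
  by apply: mulr_ge0; [apply: mulr_ge0|]; apply: ltW.
have h3 : 0 <= beta * sigma * V x u * I x u.
  apply: mulr_ge0; [apply: mulr_ge0; [apply: mulr_ge0; [exact: ltW | exact: Hs0]| exact: ltW]| exact: ltW].
have h4 : 0 <= p * I x u by apply: mulr_ge0 => //; apply: ltW.
have h5 : 0 <= xi * I x u by apply: mulr_ge0 => //; apply: ltW.
have h6 : 0 <= beta * Mb * I x u.
  apply: mulr_ge0; [apply: mulr_ge0; [exact: ltW | exact: le_trans (ltW s0) s1] | exact: ltW].
rewrite /dI /fI /Kl; lra.
Qed.

Lemma Gt_at (b : R) : t0 < b -> (forall s, t0 < s < b -> Gt s) -> Gt b.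
Proof.
move=> tb G.
have Zb := Zbound (ltW tb) G.
have GZ : forall u, t0 < u < b -> Gt u /\ Zf u <= Mb.
  move=> u /andP[u1 u2]; split; first by apply: G; apply/andP.
  by apply: Zb; apply/andP; split; apply: ltW.
have der : forall u, t0 <= u <= b -> 0 < u.
  by move=> u /andP[u1 _]; exact: lt_le_trans Ht0 u1.
move=> x; have [a0 [b0 c0]] := HG0 x; split; [|split].
- apply: (@cmp_low _ (S x) (dS x) Kl t0 b (ltW tb)) => //.
    by move=> u hu; apply: derS; apply: der.
  by move=> u /GZ [G1 Z1]; apply: lowS.
- apply: (@cmp_low _ (V x) (dV x) Kl t0 b (ltW tb)) => //.
    by move=> u hu; apply: derV; apply: der.
  by move=> u /GZ [G1 Z1]; apply: lowV.
- apply: (@cmp_low _ (I x) (dI x) Kl t0 b (ltW tb)) => //.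
    by move=> u hu; apply: derI; apply: der.
  by move=> u /GZ [G1 Z1]; apply: lowI.
Qed.

Lemma cont_at (f : R -> R) (df t : R) : is_derive t 1 f df -> {for t, continuous f}.
Proof. by case=> d _; exact/differentiable_continuous/derivable1_diffP. Qed.

Lemma Gt_near (t : R) : 0 < t -> Gt t -> \forall s \near t, Gt s.
Proof.
move=> t0' G.
have Hx : forall x, \forall s \near t, 0 < S x s /\ 0 < V x s /\ 0 < I x s.
  move=> x; have [s0 [v0 i0]] := G x.
  near=> s; split; [|split]; near: s.
  - exact: (cvgr_gt _ (cont_at (derS x t0')) 0 s0).
  - exact: (cvgr_gt _ (cont_at (derV x t0')) 0 v0).
  - exact: (cvgr_gt _ (cont_at (derI x t0')) 0 i0).
exact: (@filter_forall R T (fun x s => 0 < S x s /\ 0 < V x s /\ 0 < I x s) (nbhs t) _ Hx).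
Unshelve. all: by end_near.
Qed.

Lemma pos_all (t : R) : t0 <= t -> Gt t.
Proof.
move=> ht; case: (pselect (Gt t)) => // nG; exfalso.
set B := [set s | t0 <= s /\ ~ Gt s].
have Bt : B t by [].
have lbB : lbound B t0 by move=> s [].
have hinf : has_inf B by split; [exists t | exists t0].
set tau := inf B.
have t0tau : t0 <= tau by apply: lb_le_inf => //; exists t.
have below : forall s, t0 <= s < tau -> Gt s.
  move=> s /andP[s1 s2]; case: (pselect (Gt s)) => // ns.
  have : tau <= s by apply: ge_inf => //; case: hinf.
  by rewrite leNgt s2.
have Gtau : Gt tau.
  case: (eqVneq t0 tau) => [<- //|ne].
  have lt : t0 < tau by rewrite lt_neqAle ne t0tau.
  apply: Gt_at => // s /andP[s1 s2]; apply: below; rewrite s2 ltW //.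
have tau0 : 0 < tau by exact: lt_le_trans Ht0 t0tau.
have [e e0 he] : exists2 e : R, 0 < e & forall s, `|tau - s| < e -> Gt s.
  move: (Gt_near tau0 Gtau) => /nbhs_ballP -[e e0 he]; exists e => // s hs; apply: he.
have [b Bb bl] := inf_adherent e0 hinf.
have taub : tau <= b by apply: ge_inf => //; case: hinf.
case: Bb => _; apply; apply: he.
rewrite distrC ger0_norm; last by rewrite subr_ge0.
rewrite ltrBlDl; exact: bl.
Qed.

Lemma glob (t : R) : t0 <= t -> Gt t /\ Zf t <= Mb.
Proof.
move=> ht; split; first exact: pos_all.
apply: (@Zbound t ht) => [s /andP[s1 s2]|]; last by rewrite ht lexx.
by apply: pos_all; apply: ltW.
Qed.

Lemma globx (t : R) x : t0 <= t ->
  [/\ 0 < S x t, 0 < V x t & 0 < I x t] /\ [/\ S x t <= Mb, V x t <= Mb & I x t <= Mb].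
Proof. by move=> ht; have [G Z] := glob ht; apply: comps_le_M. Qed.

Lemma tpos (t : R) : t0 <= t -> 0 < t.
Proof. by move=> h; exact: lt_le_trans Ht0 h. Qed.

Lemma der_lyap (f : R -> R) (c t df : R) : 0 < f t -> is_derive t 1 f df ->
  is_derive t 1 (fun s => f s - c * ln (f s)) ((1 - c / f t) * df).
Proof.
move=> f0 hf.
have hl := is_derive1_comp (is_derive1_ln f0) hf.
have := is_deriveB hf (is_deriveZ c hl).
apply: is_derive_ext'; first by apply/funext.
rewrite /GRing.scale /=; field; exact: lt0r_neq0.
Qed.

Definition Wf (t : R) := \sum_x ((S x t - Ss * ln (S x t)) + (V x t - Vs * ln (V x t))
   + (I x t - Is * ln (I x t))).
Definition dW (t : R) := \sum_x ((1 - Ss / S x t) * dS x t + (1 - Vs / V x t) * dV x t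
   + (1 - Is / I x t) * dI x t).

Lemma derW (t : R) : t0 <= t -> is_derive t 1 Wf (dW t).
Proof.
move=> ht; apply: is_derive_bigsum => x.
have [[s0 v0 i0] _] := globx x ht; have t0' := tpos ht.
have := is_deriveD (is_deriveD (der_lyap Ss s0 (derS x t0')) (der_lyap Vs v0 (derV x t0')))
   (der_lyap Is i0 (derI x t0')).
by apply: is_derive_ext'; first by apply/funext.
Qed.

Let eqs : [/\ 0 < Ss, 0 < Vs & 0 < Is] /\
  [/\ mu * (1 - r) * N = (mu + p) * Ss + beta * Ss * Is - xi * Vs,
      mu * r * N = (mu + xi) * Vs + beta * sigma * Vs * Is - p * Ss &
      mu + gamma = beta * Ss + beta * sigma * Vs].
Proof.
case: Heq => [[h1 h2 h3] [e1 e2 e3]]; split; split => //.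
- by move: e1; rewrite mul0r addr0; lra.
- by move: e2; lra.
- by move: e3; lra.
Qed.

Definition m1 := Num.min ((mu + beta * Is) * Ss) (mu * (1 - r) * N).
Definition m2 := Num.min ((mu + beta * sigma * Is) * Vs) (mu * r * N).
Definition cc := Num.min (m1 / (Mb * Ss)) (m2 / (Mb * Vs)).
Definition gf (t : R) := \sum_x ((S x t - Ss) ^+ 2 + (V x t - Vs) ^+ 2).

Lemma Mb_pos : 0 < Mb.
Proof.
apply: (@lt_le_trans _ _ (\sum_(x : T) N + 1)); last by rewrite /Mb le_max lexx orbT.
have : 0 <= \sum_(x : T) N by apply: sumr_ge0 => x _; apply: ltW.
lra.
Qed.

Lemma m1_pos : 0 < m1.
Proof.
have [[Ss0 _ Is0] _] := eqs.
rewrite /m1 lt_min a_pos andbT; apply: mulr_gt0 => //.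
exact: addr_gt0 Hmu (mulr_gt0 Hbeta Is0).
Qed.

Lemma m2_pos : 0 < m2.
Proof.
have [[_ Vs0 Is0] _] := eqs.
rewrite /m2 lt_min b_pos andbT; apply: mulr_gt0 => //.
apply: (lt_le_trans Hmu); rewrite lerDl; apply: mulr_ge0; last exact: ltW.
by apply: mulr_ge0 => //; apply: ltW.
Qed.

Lemma cc_pos : 0 < cc.
Proof.
have [[Ss0 Vs0 _] _] := eqs; have M0 := Mb_pos.
rewrite /cc lt_min; apply/andP; split; apply: divr_gt0.
- exact: m1_pos.
- exact: mulr_gt0.
- exact: m2_pos.
- exact: mulr_gt0.
Qed.

Lemma dW_le (t : R) : t0 <= t -> dW t <= - cc * gf t.
Proof.
move=> ht; have [[Ss0 Vs0 Is0] [ea eb eg]] := eqs.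
set F := fun x => (1 - Ss / S x t) * fS x t + (1 - Vs / V x t) * fV x t
  + (1 - Is / I x t) * fI x t.
have e : dW t = eps * (\sum_x (1 - Ss / S x t) * laplacian adj w (S ^~ t) x)
  + eps * (\sum_x (1 - Vs / V x t) * laplacian adj w (V ^~ t) x)
  + eps * (\sum_x (1 - Is / I x t) * laplacian adj w (I ^~ t) x) + \sum_x F x.
  rewrite /dW !mulr_sumr -!big_split /=; apply: eq_bigr => x _.
  by rewrite /F /dS /dV /dI; ring.
rewrite e.
have l1 : \sum_x (1 - Ss / S x t) * laplacian adj w (S ^~ t) x <= 0.
  apply: (lap_lyap adjS wS wpos (F := S ^~ t) (ltW Ss0)) => y.
  by have [[]] := globx y ht.
have l2 : \sum_x (1 - Vs / V x t) * laplacian adj w (V ^~ t) x <= 0.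
  apply: (lap_lyap adjS wS wpos (F := V ^~ t) (ltW Vs0)) => y.
  by have [[]] := globx y ht.
have l3 : \sum_x (1 - Is / I x t) * laplacian adj w (I ^~ t) x <= 0.
  apply: (lap_lyap adjS wS wpos (F := I ^~ t) (ltW Is0)) => y.
  by have [[]] := globx y ht.
have el1 := mulr_ge0_le0 (ltW Heps) l1.
have el2 := mulr_ge0_le0 (ltW Heps) l2.
have el3 := mulr_ge0_le0 (ltW Heps) l3.
have hF : \sum_x F x <= \sum_x (- cc * ((S x t - Ss) ^+ 2 + (V x t - Vs) ^+ 2)).
  apply: ler_sum => x _; have [[s0 v0 i0] [s1 v1 i1]] := globx x ht.
  have k := key_alg s0 v0 i0 Ss0 Vs0 Is0 Hp0 Hxi Hmu Hbeta Hs0 a_pos b_pos ea eb eg.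
  rewrite -/m1 -/m2 in k.
  apply: le_trans k _.
  have f1 : cc * (S x t - Ss) ^+ 2 <= m1 * ((S x t - Ss) ^+ 2 / (S x t * Ss)).
    apply: (frac_ge m1_pos (sqr_ge0 _) s0 s1 Ss0); by rewrite /cc ge_min lexx.
  have f2 : cc * (V x t - Vs) ^+ 2 <= m2 * ((V x t - Vs) ^+ 2 / (V x t * Vs)).
    apply: (frac_ge m2_pos (sqr_ge0 _) v0 v1 Vs0); by rewrite /cc ge_min lexx orbT.
  move: f1 f2.
  set q1 := (S x t - Ss) ^+ 2; set q2 := (V x t - Vs) ^+ 2.
  set A1 := m1 * _; set A2 := m2 * _.
  lra.
rewrite /gf [X in _ <= X]mulr_sumr.
apply: le_trans (lerD (lerD (lerD el1 el2) el3) hF) _.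
by rewrite !add0r.
Qed.

Definition Wmin := \sum_(x : T) ((Ss - Ss * ln Ss) + (Vs - Vs * ln Vs) + (Is - Is * ln Is)).

Lemma W_lb (t : R) : t0 <= t -> Wmin <= Wf t.
Proof.
move=> ht; have [[Ss0 Vs0 Is0] _] := eqs.
apply: ler_sum => x _; have [[s0 v0 i0] _] := globx x ht.
have h1 := lyap_lb s0 Ss0; have h2 := lyap_lb v0 Vs0; have h3 := lyap_lb i0 Is0.
lra.
Qed.

Lemma W_noninc (a b : R) : t0 <= a -> a <= b -> Wf b <= Wf a.
Proof.
move=> ha hab; apply: (@nonincr _ Wf dW a b hab).
  by move=> t /andP[t1 _]; apply: derW; exact: le_trans ha t1.
move=> t /andP[t1 _]; have ht : t0 <= t by apply: le_trans ha (ltW t1).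
apply: le_trans (dW_le ht) _.
rewrite mulNr oppr_le0; apply: mulr_ge0; first exact: ltW cc_pos.
by apply: sumr_ge0 => x _; apply: addr_ge0; apply: sqr_ge0.
Qed.

Definition K0 := mu * N + (mu + p + xi + gamma) * Mb + 2 * beta * Mb * Mb.
Definition Kd := eps * (Dg * Mb) + K0.

Lemma dbnd (t : R) x : t0 <= t ->
  [/\ `|dS x t| <= Kd, `|dV x t| <= Kd & `|dI x t| <= Kd].
Proof.
move=> ht; have [[s0 v0 i0] [s1 v1 i1]] := globx x ht.
have := fbnd s0 s1 v0 v1 i0 i1 (ltW Hmu) Hp0 Hxi Hgam (ltW Hbeta) Hs0 Hs1 Hr0 Hr1 (ltW HN).
move=> /= [h1 h2 h3].
have lb : forall (F : T -> R), (forall y, 0 < F y <= Mb) ->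
    `|eps * laplacian adj w F x| <= eps * (Dg * Mb).
  move=> F hF; rewrite normrM gtr0_norm //; apply: ler_wpM2l; first exact: ltW.
  apply: lap_abs => y; have /andP[a1 a2] := hF y; have /andP[b1 b2] := hF x.
  by rewrite ler_norml; apply/andP; split; move: a1 a2 b1 b2; lra.
have lS := lb (S ^~ t) (fun y => let: conj (And3 a _ _) (And3 b _ _) := globx y ht in
   introT andP (conj a b)).
have lV := lb (V ^~ t) (fun y => let: conj (And3 _ a _) (And3 _ b _) := globx y ht in
   introT andP (conj a b)).
have lI := lb (I ^~ t) (fun y => let: conj (And3 _ _ a) (And3 _ _ b) := globx y ht in
   introT andP (conj a b)).
rewrite /dS /dV /dI /Kd /fS /fV /fI.
split; apply: le_trans (ler_normD _ _) _; apply: lerD => //.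
Qed.

Definition dg (t : R) := \sum_x (2 * (S x t - Ss) * dS x t + 2 * (V x t - Vs) * dV x t).
Definition Lg := \sum_(x : T) (4 * ((Mb + Ss + Vs) * Kd)) + 1.

Lemma der_sq (f : R -> R) (c t df : R) : is_derive t 1 f df ->
  is_derive t 1 (fun s => (f s - c) ^+ 2) (2 * (f t - c) * df).
Proof.
move=> hf.
have hfc : is_derive t 1 (fun s => f s - c) df.
  apply: is_derive_ext' (is_deriveB hf (is_derive_cst c t 1)); first by apply/funext.
  by rewrite subr0.
have := is_deriveM hfc hfc.
apply: is_derive_ext'; first by apply/funext => s /=; rewrite expr2.
by rewrite /GRing.scale /=; ring.
Qed.

Lemma derg (t : R) : t0 <= t -> is_derive t 1 gf (dg t).
Proof.
move=> ht; apply: is_derive_bigsum => x; have t0' := tpos ht.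
have := is_deriveD (der_sq Ss (derS x t0')) (der_sq Vs (derV x t0')).
by apply: is_derive_ext'; first by apply/funext.
Qed.

Lemma Kd_ge0 : 0 <= Kd.
Proof.
have M0 := ltW Mb_pos; have D0 := Dg_ge0.
have e0 := ltW Heps; have m0 := ltW Hmu; have b0 := ltW Hbeta; have N0 := ltW HN.
rewrite /Kd /K0; apply: addr_ge0; first by apply: mulr_ge0 => //; apply: mulr_ge0.
apply: addr_ge0; first by apply: addr_ge0; [apply: mulr_ge0|apply: mulr_ge0 => //;
  do 3 (apply: addr_ge0 => //)].
by do 2 (apply: mulr_ge0 => //); apply: mulr_ge0.
Qed.

Lemma Lg_pos : 0 < Lg.
Proof.
have [[Ss0 Vs0 _] _] := eqs; have M0 := Mb_pos; have K := Kd_ge0.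
have : 0 <= \sum_(x : T) (4 * ((Mb + Ss + Vs) * Kd)).
  apply: sumr_ge0 => x _; apply: mulr_ge0 => //; apply: mulr_ge0 => //.
  by apply: addr_ge0; [apply: addr_ge0|]; apply: ltW.
rewrite /Lg; lra.
Qed.

Lemma dg_lb (t : R) : t0 <= t -> - Lg <= dg t.
Proof.
move=> ht; have [[Ss0 Vs0 _] _] := eqs.
have h : \sum_(x : T) - (4 * ((Mb + Ss + Vs) * Kd)) <= dg t.
  apply: ler_sum => x _; have [[s0 v0 _] [s1 v1 _]] := globx x ht.
  have [d1 d2 _] := dbnd x ht.
  have a1 : `|2 * (S x t - Ss)| <= 2 * (Mb + Ss + Vs).
    by rewrite ler_norml; apply/andP; split; move: s0 s1 Ss0 Vs0; lra.
  have a2 : `|2 * (V x t - Vs)| <= 2 * (Mb + Ss + Vs).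
    by rewrite ler_norml; apply/andP; split; move: v0 v1 Ss0 Vs0; lra.
  have p1 := prod_lb a1 d1; have p2 := prod_lb a2 d2.
  move: p1 p2; set P1 := 2 * (S x t - Ss) * dS x t; set P2 := 2 * (V x t - Vs) * dV x t.
  set C := (Mb + Ss + Vs) * Kd.
  have -> : 2 * (Mb + Ss + Vs) * Kd = 2 * C by rewrite /C; ring.
  lra.
apply: le_trans h; rewrite sumrN /Lg; lra.
Qed.

Lemma g_lower (t s e : R) : t0 <= t -> t <= s -> e <= gf t -> e - Lg * (s - t) <= gf s.
Proof.
move=> ht ts he.
have := @nonincr _ (fun u => - gf u - Lg * u) (fun u => - dg u - Lg) t s ts.
have d : forall u, t <= u <= s -> is_derive u 1 (fun u => - gf u - Lg * u) (- dg u - Lg).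
  move=> u /andP[u1 _]; have hu : t0 <= u by exact: le_trans ht u1.
  have := is_deriveB (is_deriveN (derg hu)) (is_deriveZ Lg (is_derive_id u 1)).
  apply: is_derive_ext'; first by apply/funext.
  by rewrite /GRing.scale /= mulr1.
move=> /(_ d).
have n : forall u, t < u < s -> - dg u - Lg <= 0.
  move=> u /andP[u1 _]; have := dg_lb (le_trans ht (ltW u1)); lra.
move=> /(_ n); lra.
Qed.

Lemma g_cvg (e : R) : 0 < e -> exists T1, t0 <= T1 /\ forall t, T1 <= t -> gf t < e.
Proof.
move=> e0.
case: (pselect (exists T1, t0 <= T1 /\ forall t, T1 <= t -> gf t < e)) => // nH; exfalso.
have often : forall T1, t0 <= T1 -> exists t, T1 <= t /\ e <= gf t.
  move=> T1 h1; apply: contrapT => nn; apply: nH; exists T1; split => // t ht.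
  rewrite ltNge; apply/negP => he; apply: nn; exists t; split => //.
have L0 := Lg_pos; have c0 := cc_pos.
set h := e / (2 * Lg).
have h0 : 0 < h by apply: divr_gt0 => //; apply: mulr_gt0.
have Lh : Lg * h = e / 2 by rewrite /h; field; apply: lt0r_neq0.
set d := cc * (e / 2) * h.
have d0 : 0 < d by apply: mulr_gt0 => //; apply: mulr_gt0 => //; apply: divr_gt0.
have step : forall t, t0 <= t -> e <= gf t -> Wf (t + h) <= Wf t - d.
  move=> t ht he.
  have th : t <= t + h by rewrite lerDl ltW.
  have := @nonincr _ (fun u => Wf u + cc * (e / 2) * u) (fun u => dW u + cc * (e / 2)) t (t + h) th.
  have dd : forall u, t <= u <= t + h ->
      is_derive u 1 (fun u => Wf u + cc * (e / 2) * u) (dW u + cc * (e / 2)).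
    move=> u /andP[u1 _]; have hu : t0 <= u by exact: le_trans ht u1.
    have := is_deriveD (derW hu) (is_deriveZ (cc * (e / 2)) (is_derive_id u 1)).
    apply: is_derive_ext'; first by apply/funext.
    by rewrite /GRing.scale /= mulr1.
  move=> /(_ dd).
  have n : forall u, t < u < t + h -> dW u + cc * (e / 2) <= 0.
    move=> u /andP[u1 u2]; have hu : t0 <= u by exact: le_trans ht (ltW u1).
    have gl := g_lower ht (ltW u1) he.
    have : Lg * (u - t) <= Lg * h by apply: ler_wpM2l; [apply: ltW | move: u2; lra].
    rewrite Lh => hh.
    have g2 : e / 2 <= gf u by move: gl hh; lra.
    have : cc * (e / 2) <= cc * gf u by apply: ler_wpM2l => //; apply: ltW.
    have := dW_le hu; lra.
  move=> /(_ n).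
  have -> : cc * (e / 2) * (t + h) = cc * (e / 2) * t + d by rewrite /d; ring.
  lra.
have iter : forall n : nat, exists t, t0 <= t /\ Wf t <= Wf t0 - n%:R * d.
  elim => [|n [tn [htn hWn]]]; first by exists t0; rewrite mul0r subr0.
  have [t' [h1 h2]] := often tn htn.
  have ht' : t0 <= t' by exact: le_trans htn h1.
  exists (t' + h); split; first by apply: le_trans ht' _; rewrite lerDl ltW.
  have s1 := step t' ht' h2; have s2 := W_noninc htn h1.
  rewrite -addn1 natrD mulrDl mul1r.
  move: s1 s2 hWn; lra.
have Wt0 := W_lb (le_refl t0).
have q0 : 0 <= (Wf t0 - Wmin) / d by apply: divr_ge0; [move: Wt0; lra | apply: ltW].
have hb := archi_boundP q0.
set n := Num.Def.archi_bound _ in hb.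
have [tn [htn hWn]] := iter n.
have := W_lb htn.
have : Wf t0 - Wmin < n%:R * d by rewrite -ltr_pdivrMr.
move: hWn; lra.
Qed.

Lemma sq_lt (a e : R) : 0 < e -> a ^+ 2 < e ^+ 2 -> `|a| < e.
Proof.
move=> e0 h; rewrite ltNge; apply/negP => he.
have : e * e <= `|a| * `|a| by apply: ler_pM => //; apply: ltW.
rewrite -normrM -expr2 ger0_norm ?sqr_ge0 // -expr2.
by move: h; rewrite ltNge => /negP.
Qed.

Lemma SV_cvg : unif_cvg S Ss /\ unif_cvg V Vs.
Proof.
have key : forall e, 0 < e -> exists T1, t0 <= T1 /\ forall t, T1 <= t -> forall x,
    `|S x t - Ss| < e /\ `|V x t - Vs| < e.
  move=> e e0; have [T1 [h1 h2]] := g_cvg (mulr_gt0 e0 e0).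
  exists T1; split => // t ht x; have g := h2 t ht.
  have hx : (S x t - Ss) ^+ 2 + (V x t - Vs) ^+ 2 <= gf t.
    rewrite /gf (bigD1 x) //= lerDl; apply: sumr_ge0 => y _.
    by apply: addr_ge0; apply: sqr_ge0.
  have q1 := sqr_ge0 (S x t - Ss); have q2 := sqr_ge0 (V x t - Vs).
  split; apply: sq_lt => //; rewrite expr2; move: q1 q2 hx g; lra.
split => e e0; have [T1 [_ h]] := key e e0; exists T1 => t ht x; by have [] := h t ht x.
Qed.

Lemma I_cvg : unif_cvg I Is.
Proof.
move=> e e0.
have [[Ss0 Vs0 Is0] [ea eb eg]] := eqs.
have [cS cV] := SV_cvg.
set Kd1 := Kd + 1.
have Kd10 : 0 < Kd1 by rewrite /Kd1; have := Kd_ge0; lra.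
set h := e / (2 * Kd1).
have h0 : 0 < h by apply: divr_gt0 => //; apply: mulr_gt0.
have Kh : Kd1 * h = e / 2 by rewrite /h; field; apply: lt0r_neq0.
set ka := beta * Ss * e / 8.
have ka0 : 0 < ka by apply: divr_gt0 => //; apply: mulr_gt0 => //; apply: mulr_gt0.
set C := eps * Dg * 2 + mu + p + xi + beta * Is + 1.
have C0 : 0 < C.
  have := Dg_ge0; have := mulr_ge0 (ltW Heps) Dg_ge0.
  have := mulr_ge0 (ltW Hbeta) (ltW Is0).
  move: Hmu Hp0 Hxi; rewrite /C; lra.
set rho := Num.min (Ss / 2) (Num.min (ka / C) (ka * h / 4)).
have rho0 : 0 < rho.
  rewrite /rho !lt_min; apply/and3P; split.
  - by apply: divr_gt0.
  - by apply: divr_gt0.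
  - by apply: divr_gt0 => //; apply: mulr_gt0.
have r1 : rho <= Ss / 2 by rewrite /rho ge_min lexx.
have r2 : rho <= ka / C by rewrite /rho !ge_min lexx orbT.
have r3 : rho <= ka * h / 4 by rewrite /rho !ge_min lexx !orbT.
have [T1 hT1] := cS rho rho0; have [T2 hT2] := cV rho rho0.
set T3 := Num.max t0 (Num.max T1 T2).
exists T3 => t ht x.
have hT3 : forall u, T3 <= u -> [/\ t0 <= u, T1 <= u & T2 <= u].
  by move=> u; rewrite /T3 !ge_max => /and3P[].
have near_eq : forall u y, T3 <= u -> `|S y u - Ss| < rho /\ `|V y u - Vs| < rho.
  by move=> u y /hT3[_ u1 u2]; split; [apply: hT1 | apply: hT2].
have Eb : forall u, T3 <= u -> `|dS x u - beta * S x u * (Is - I x u)| <= ka.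
  move=> u hu; have [u0 _ _] := hT3 u hu.
  have ed : dS x u - beta * S x u * (Is - I x u) =
     eps * laplacian adj w (S ^~ u) x - (mu + p) * (S x u - Ss) + xi * (V x u - Vs)
       - beta * Is * (S x u - Ss).
    rewrite /dS /fS ea; ring.
  rewrite ed.
  have lp : `|laplacian adj w (S ^~ u) x| <= Dg * (2 * rho).
    apply: lap_abs => y; have [a1 _] := near_eq u y hu; have [a2 _] := near_eq u x hu.
    move: a1 a2; rewrite !ltr_norml ler_norml => /andP[a1 a2] /andP[a3 a4].
    by apply/andP; split; lra.
  have [s1 v1] := near_eq u x hu.
  set a := S x u - Ss in s1 *; set b := V x u - Vs in v1 *.
  set L := laplacian adj w (S ^~ u) x in lp *.
  have t1 : `|eps * L| <= eps * (Dg * (2 * rho)).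
    by rewrite normrM gtr0_norm //; apply: ler_wpM2l => //; apply: ltW.
  have t2 : `|(mu + p) * a| <= (mu + p) * rho.
    rewrite normrM ger0_norm; last by apply: addr_ge0 => //; apply: ltW.
    by apply: ler_wpM2l; [apply: addr_ge0 => //; apply: ltW | apply: ltW].
  have t3 : `|xi * b| <= xi * rho.
    by rewrite normrM ger0_norm //; apply: ler_wpM2l => //; apply: ltW.
  have t4 : `|beta * Is * a| <= beta * Is * rho.
    rewrite normrM ger0_norm; last by apply: mulr_ge0; apply: ltW.
    by apply: ler_wpM2l; [apply: mulr_ge0; apply: ltW | apply: ltW].
  have : `|eps * L - (mu + p) * a + xi * b - beta * Is * a| <=
      eps * (Dg * (2 * rho)) + (mu + p) * rho + xi * rho + beta * Is * rho.
    apply: le_trans (ler_normD _ _) _; rewrite normrN; apply: lerD => //.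
    apply: le_trans (ler_normD _ _) _; apply: lerD => //.
    by apply: le_trans (ler_normB _ _) _; apply: lerD.
  move=> hh; apply: le_trans hh _.
  have : C * rho <= ka.
    have -> : ka = C * (ka / C) by field; apply: lt0r_neq0.
    by apply: ler_wpM2l => //; apply: ltW.
  have : 0 <= rho := ltW rho0.
  rewrite /C => q1 q2.
  have : eps * (Dg * (2 * rho)) + (mu + p) * rho + xi * rho + beta * Is * rho
      = (eps * Dg * 2 + mu + p + xi + beta * Is) * rho by ring.
  move=> ->; move: q1 q2; set Z := eps * Dg * 2 + mu + p + xi + beta * Is.
  have -> : (Z + 1) * rho = Z * rho + rho by ring.
  lra.
have Sl : forall u, T3 <= u -> Ss / 2 <= S x u.
  move=> u hu; have [s1 _] := near_eq u x hu; move: s1; rewrite ltr_norml => /andP[a1 a2].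
  move: r1 a1; lra.
have [ht0 _ _] := hT3 t ht.
have th : t <= t + h by rewrite lerDl ltW.
have hS := @lin_upper _ (S x) (dS x).
have hS' := @lin_lower _ (S x) (dS x).
have dSd : forall u, t <= u <= t + h -> is_derive u 1 (S x) (dS x u).
  by move=> u /andP[u1 _]; apply: derS; apply: tpos; exact: le_trans ht0 u1.
have dId : forall u, t <= u <= t + h -> is_derive u 1 (I x) (dI x u).
  by move=> u /andP[u1 _]; apply: derI; apply: tpos; exact: le_trans ht0 u1.
have Ib : forall u, t < u < t + h -> - Kd1 <= dI x u /\ dI x u <= Kd1.
  move=> u /andP[u1 _]; have [_ _ d3] := dbnd x (le_trans ht0 (ltW u1)).
  by move: d3; rewrite ler_norml => /andP[a1 a2]; split; rewrite /Kd1; lra.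
have St1 : `|S x (t + h) - Ss| < rho.
  by have [] := near_eq (t + h) x (le_trans ht th).
have St0 : `|S x t - Ss| < rho by have [] := near_eq t x ht.
rewrite ltNge; apply/negP => he.
move: St1; rewrite ltr_norml => /andP[a1 a2].
move: St0; rewrite ltr_norml => /andP[a3 a4].
have kh : 4 * rho <= ka * h by move: r3; lra.
move: he; rewrite ler_normr => /orP[he|he].
-
  have Il : forall u, t <= u <= t + h -> Is + e / 2 <= I x u.
    move=> u /andP[u1 u2].
    have := @lin_lower _ (I x) (dI x) (- Kd1) t u u1.
    have d' : forall v, t <= v <= u -> is_derive v 1 (I x) (dI x v).
      by move=> v /andP[v1 v2]; apply: dId; rewrite v1 (le_trans v2 u2).
    move=> /(_ d').
    have n : forall v, t < v < u -> - Kd1 <= dI x v.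
      by move=> v /andP[v1 v2]; have [] := Ib v; first by rewrite v1 (lt_le_trans v2 u2).
    move=> /(_ n) hh.
    have : Kd1 * (u - t) <= Kd1 * h by apply: ler_wpM2l; [apply: ltW | move: u2; lra].
    rewrite Kh; move: hh he; lra.
  have := hS (- ka) t (t + h) th dSd.
  have n : forall u, t < u < t + h -> dS x u <= - ka.
    move=> u /andP[u1 u2].
    have hu : T3 <= u by apply: le_trans ht (ltW u1).
    have E := Eb u hu; move: E; rewrite ler_norml => /andP[E1 E2].
    have i1 := Il u (introT andP (conj (ltW u1) (ltW u2))).
    have s1 := Sl u hu.
    have : beta * (Ss / 2) * (e / 2) <= beta * S x u * (I x u - Is).
      apply: ler_pM.
      + by apply: mulr_ge0; [apply: ltW | apply: divr_ge0; [apply: ltW|]].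
      + by apply: divr_ge0; [apply: ltW|].
      + by apply: ler_wpM2l => //; apply: ltW.
      + by move: i1; lra.
    have -> : beta * (Ss / 2) * (e / 2) = 2 * ka by rewrite /ka; field.
    move: E1 E2; set P := beta * S x u * (Is - I x u).
    have -> : beta * S x u * (I x u - Is) = - P by rewrite /P; ring.
    lra.
  move=> /(_ n).
  have : 0 < ka * h by apply: mulr_gt0.
  move: a1 a2 a3 a4 kh; lra.
-
  have Iu : forall u, t <= u <= t + h -> I x u <= Is - e / 2.
    move=> u /andP[u1 u2].
    have := @lin_upper _ (I x) (dI x) Kd1 t u u1.
    have d' : forall v, t <= v <= u -> is_derive v 1 (I x) (dI x v).
      by move=> v /andP[v1 v2]; apply: dId; rewrite v1 (le_trans v2 u2).
    move=> /(_ d').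
    have n : forall v, t < v < u -> dI x v <= Kd1.
      by move=> v /andP[v1 v2]; have [] := Ib v; first by rewrite v1 (lt_le_trans v2 u2).
    move=> /(_ n) hh.
    have : Kd1 * (u - t) <= Kd1 * h by apply: ler_wpM2l; [apply: ltW | move: u2; lra].
    rewrite Kh; move: hh he; lra.
  have := hS' ka t (t + h) th dSd.
  have n : forall u, t < u < t + h -> ka <= dS x u.
    move=> u /andP[u1 u2].
    have hu : T3 <= u by apply: le_trans ht (ltW u1).
    have E := Eb u hu; move: E; rewrite ler_norml => /andP[E1 E2].
    have i1 := Iu u (introT andP (conj (ltW u1) (ltW u2))).
    have s1 := Sl u hu.
    have : beta * (Ss / 2) * (e / 2) <= beta * S x u * (Is - I x u).
      apply: ler_pM.
      + by apply: mulr_ge0; [apply: ltW | apply: divr_ge0; [apply: ltW|]].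
      + by apply: divr_ge0; [apply: ltW|].
      + by apply: ler_wpM2l => //; apply: ltW.
      + by move: i1; lra.
    have -> : beta * (Ss / 2) * (e / 2) = 2 * ka by rewrite /ka; field.
    move: E1 E2; set P := beta * S x u * (Is - I x u).
    lra.
  move=> /(_ n).
  have : 0 < ka * h by apply: mulr_gt0.
  move: a1 a2 a3 a4 kh; lra.
Qed.
End After.

Lemma main_res : [/\ unif_cvg S Ss, unif_cvg V Vs & unif_cvg I Is].
Proof.
have [t0 [Ht0 HG0]] := start.
have [hS hV] := SV_cvg Ht0 HG0.
by split => //; apply: (I_cvg Ht0 HG0).
Qed.
End Main.

Unset Implicit Arguments.
Close Scope classical_set_scope.

Theorem theorem1 (R : realType) (T : finType) (adj : rel T) (w : T -> T -> R)
  (N r mu p beta sigma xi gamma eps : R) (Ss Vs Is : R) :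
  weighted_graph adj w ->
  0 < N -> 0 < r -> r < 1 -> 0 < mu -> 0 < beta ->
  0 <= p -> p <= 1 -> 0 <= sigma -> sigma <= 1 -> 0 < eps -> eps <= 1 ->
  0 <= xi -> 0 <= gamma ->
  1 < R0 N r mu p beta sigma xi gamma ->
  endemic_equilibrium N r mu p beta sigma xi 0 gamma Ss Vs Is ->
  forall S V I : T -> R -> R,
    SVIRS_solution adj w N r mu p beta sigma xi 0 gamma eps S V I ->
    (forall x, 0 < S x 0 /\ 0 < V x 0 /\ 0 < I x 0) ->
    [/\ unif_cvg S Ss, unif_cvg V Vs & unif_cvg I Is].
Proof.
move=> Hg HN Hr0 Hr1 Hmu Hbeta Hp0 Hp1 Hs0 Hs1 Heps Heps1 Hxi Hgam HR0 Heq S V I Hsol Hinit.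
exact: (main_res Hg HN Hr0 Hr1 Hmu Hbeta Hp0 Hs0 Hs1 Heps Hxi Hgam Heq Hsol Hinit).
Qed.
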